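(* In the iPALM setting described in the context, let $\varepsilon\in(0,1)$, $\beta_0,\rho_0>0$, $\sigma>1$, and choose $\beta_k=\beta_0\sigma^k$, $\rho_k=\rho_0\sigma^{-k}$, $\bar\varepsilon_k=\min\{\bar\varepsilon,\sqrt{\rho_0/(20\sigma)}\,\sigma^{-k}\}$ with $\bar\varepsilon=\frac{\varepsilon(\sigma-1)}{8(\sigma+1)}\min\{1,\sqrt{\beta_0\rho_0}\}$. Let $D_0=\sqrt{\beta_0\rho_0\|x^{(0)}-x^*\|^2+\|\lambda^{(0)}-\lambda^*\|^2}$, let $K\ge1$ be an integer, and set $B_x=\frac{2\bar\varepsilon(\sigma^K-1)}{\rho_0(\sigma-1)}+\frac{D_0}{\sqrt{\beta_0\rho_0}}$ and $B_\lambda=\frac{2\bar\varepsilon\sqrt{\beta_0}(\sigma^K-1)}{\sqrt{\rho_0}(\sigma-1)}+D_0$. Then $\|x^{(k)}-x^*\|\le B_x$ and $\|\lambda^{(k)}-\lambda^*\|\le B_\lambda$ for all $0\le k\le K$, and $\|x_*^{(k+1)}-x^*\|\le B_x$ for all $0\le k<K$, where $x_*^{(k+1)}=\arg\min_x\Psi_k(x)$.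
   Context: iPALM setting. Consider $\min_x G(x):=f(x)+r(x)$ subject to $A_Ex=b_E$, $A_Ix\le b_I$, where $f:\mathbb R^n\to\mathbb R$ is convex, differentiable with $L_f$-Lipschitz gradient and $\mu$-strongly convex ($\mu\ge0$), and $r$ is proper closed convex. Write $A=[A_E;A_I]$, $b=[b_E;b_I]$, and multipliers $\lambda=[\lambda_E;\lambda_I]$. Assume $(x^*,\lambda^* )$ satisfies the KKT conditions $0\in\partial G(x^* )+A^\top\lambda^*$, $A_Ex^*=b_E$, $A_Ix^*\le b_I$, $\lambda_I^*\ge0$, $\langle\lambda_I^*,A_Ix^*-b_I\rangle=0$. The augmented Lagrangian is $\mathcal L_\beta(x,\lambda)=G(x)+\langle\lambda_E,A_Ex-b_E\rangle+\frac\beta2\|A_Ex-b_E\|^2+\frac1{2\beta}\big(\|[\beta(A_Ix-b_I)+\lambda_I]_+\|^2-\|\lambda_I\|^2\big)$, with $[\cdot]_+$ the componentwise positive part. Given $x^{(0)}\in\mathrm{dom}(G)$, $\lambda^{(0)}$, and positive numbers $\beta_k,\rho_k$ and $\bar\varepsilon_k\ge0$, the iPALM iterates satisfy for each $k\ge0$: with $\Psi_k(x)=\mathcal L_{\beta_k}(x,\lambda^{(k)})+\frac{\rho_k}2\|x-x^{(k)}\|^2$, the point $x^{(k+1)}$ is any point with $\mathrm{dist}(0,\partial\Psi_k(x^{(k+1)}))\le\bar\varepsilon_k$, and $\lambda_E^{(k+1)}=\lambda_E^{(k)}+\beta_k(A_Ex^{(k+1)}-b_E)$, $\lambda_I^{(k+1)}=[\lambda_I^{(k)}+\beta_k(A_Ix^{(k+1)}-b_I)]_+$.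 $\partial$ is the convex subdifferential and $\mathrm{dist}(0,S)=\inf_{s\in S}\|s\|$. *)

(* Defs.v *)
(* Vectors of R^n are column vectors
   'cV[R]_n over an abstract R : realType; the Euclidean inner product and
   norm are defined explicitly below (the library's matrix norm is the
   max-norm, not the Euclidean one). *)
From mathcomp Require Import all_boot all_order all_algebra.
From mathcomp Require Import all_classical all_reals all_analysis.
Set Implicit Arguments. Unset Strict Implicit. Unset Printing Implicit Defensive.
Import Order.TTheory GRing.Theory Num.Theory.
Import numFieldNormedType.Exports.
Local Open Scope ring_scope.

Section Defs.
Variable R : realType.

Definition dotv (m : nat) (u v : 'cV[R]_m) : R := \sum_(i < m) u i 0 * v i 0.
Definition sqn (m : nat) (u : 'cV[R]_m) : R := dotv u u.
Definition enorm (m : nat) (u : 'cV[R]_m) : R := Num.sqrt (sqn u).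

Definition pospart (m : nat) (u : 'cV[R]_m) : 'cV[R]_m :=
  map_mx (fun t => Num.max t 0) u.

Definition has_gradient (n : nat) (f : 'cV[R]_n -> R) (gf : 'cV[R]_n -> 'cV[R]_n) :=
  forall x, differentiable f x /\ forall v, 'D_v f x = dotv (gf x) v.

Definition lipschitz_vec (n : nat) (g : 'cV[R]_n -> 'cV[R]_n) (L : R) :=
  forall x y, enorm (g x - g y) <= L * enorm (x - y).

Definition strongly_convex (n : nat) (f : 'cV[R]_n -> R) (mu : R) :=
  forall x y t, 0 <= t <= 1 ->
    f (t *: x + (1 - t) *: y) <=
    t * f x + (1 - t) * f y - mu / 2 * t * (1 - t) * sqn (x - y).

Local Open Scope ereal_scope.

Definition econvex (n : nat) (r : 'cV[R]_n -> \bar R) :=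
  forall x y (t : R), (0 <= t <= 1)%R ->
    r ((t *: x + (1 - t) *: y)%R) <= t%:E * r x + (1 - t)%:E * r y.

Definition eproper (n : nat) (r : 'cV[R]_n -> \bar R) :=
  (forall x, r x != -oo) /\ exists x, r x < +oo.

Definition eclosed (n : nat) (r : 'cV[R]_n -> \bar R) := lower_semicontinuous r.

Definition subdiff (n : nat) (h : 'cV[R]_n -> \bar R) (x g : 'cV[R]_n) : Prop :=
  h x \is a fin_num /\ forall y, h x + (dotv g (y - x))%:E <= h y.

(* dist(0, S) <= e, with dist(0,S) = inf_{s in S} ||s|| (= +oo if S empty) *)
Definition dist0_le (n : nat) (S : 'cV[R]_n -> Prop) (e : R) : Prop :=
  forall d : R, (0 < d)%R -> exists s, S s /\ (enorm s <= e + d)%R.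

Definition Gfun (n : nat) (f : 'cV[R]_n -> R) (r : 'cV[R]_n -> \bar R) x :=
  (f x)%:E + r x.

Definition auglag (n mE mI : nat) (f : 'cV[R]_n -> R) (r : 'cV[R]_n -> \bar R)
  (AE : 'M[R]_(mE, n)) (bE : 'cV[R]_mE) (AI : 'M[R]_(mI, n)) (bI : 'cV[R]_mI)
  (beta : R) (lE : 'cV[R]_mE) (lI : 'cV[R]_mI) (x : 'cV[R]_n) : \bar R :=
  Gfun f r x +
  (dotv lE (AE *m x - bE) + beta / 2 * sqn (AE *m x - bE)
   + (2 * beta)^-1 * (sqn (pospart (beta *: (AI *m x - bI) + lI)) - sqn lI))%:E.

Definition Psi (n mE mI : nat) (f : 'cV[R]_n -> R) (r : 'cV[R]_n -> \bar R)
  (AE : 'M[R]_(mE, n)) (bE : 'cV[R]_mE) (AI : 'M[R]_(mI, n)) (bI : 'cV[R]_mI)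
  (beta : R) (lE : 'cV[R]_mE) (lI : 'cV[R]_mI) (rho : R) (xk : 'cV[R]_n)
  (x : 'cV[R]_n) : \bar R :=
  auglag f r AE bE AI bI beta lE lI x + (rho / 2 * sqn (x - xk))%:E.

Local Close Scope ereal_scope.

Definition beta_k (beta0 sigma : R) (k : nat) : R := beta0 * sigma ^+ k.
Definition rho_k (rho0 sigma : R) (k : nat) : R := rho0 * sigma ^- k.
Definition epsbar (eps beta0 rho0 sigma : R) : R :=
  eps * (sigma - 1) / (8 * (sigma + 1)) * Num.min 1 (Num.sqrt (beta0 * rho0)).
Definition epsbar_k (eps beta0 rho0 sigma : R) (k : nat) : R :=
  Num.min (epsbar eps beta0 rho0 sigma)
          (Num.sqrt (rho0 / (20 * sigma)) * sigma ^- k).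

End Defs.

(* Main.v *)
Require Import Defs.
From mathcomp Require Import all_boot all_order all_algebra.
From mathcomp Require Import all_classical all_reals all_analysis.
From mathcomp Require Import ring lra.
Import Order.TTheory GRing.Theory Num.Theory.
Import numFieldNormedType.Exports.
Local Open Scope ring_scope.

Set Implicit Arguments. Unset Strict Implicit. Unset Printing Implicit Defensive.

Section Vec.
Variable R : realType.

Lemma dotvE m (u v : 'cV[R]_m) : dotv u v = (u^T *m v) 0 0.
Proof. by rewrite /dotv !mxE; apply: eq_bigr => i _; rewrite !mxE. Qed.

Lemma dotvDl m (u w v : 'cV[R]_m) : dotv (u + w) v = dotv u v + dotv w v.
Proof. by rewrite !dotvE linearD mulmxDl mxE. Qed.
Lemma dotvDr m (u w v : 'cV[R]_m) : dotv v (u + w) = dotv v u + dotv v w.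
Proof. by rewrite !dotvE mulmxDr mxE. Qed.
Lemma dotvZl m a (u v : 'cV[R]_m) : dotv (a *: u) v = a * dotv u v.
Proof. by rewrite !dotvE linearZ /= -scalemxAl mxE. Qed.
Lemma dotvZr m a (u v : 'cV[R]_m) : dotv v (a *: u) = a * dotv v u.
Proof. by rewrite !dotvE -scalemxAr mxE. Qed.
Lemma dotvNl m (u v : 'cV[R]_m) : dotv (- u) v = - dotv u v.
Proof. by rewrite -scaleN1r dotvZl mulN1r. Qed.
Lemma dotvNr m (u v : 'cV[R]_m) : dotv v (- u) = - dotv v u.
Proof. by rewrite -scaleN1r dotvZr mulN1r. Qed.
Lemma dotvBl m (u w v : 'cV[R]_m) : dotv (u - w) v = dotv u v - dotv w v.
Proof. by rewrite dotvDl dotvNl. Qed.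
Lemma dotvBr m (u w v : 'cV[R]_m) : dotv v (u - w) = dotv v u - dotv v w.
Proof. by rewrite dotvDr dotvNr. Qed.
Lemma dotvC m (u v : 'cV[R]_m) : dotv u v = dotv v u.
Proof. by rewrite /dotv; apply: eq_bigr => i _; rewrite mulrC. Qed.
Lemma dotv0r m (u : 'cV[R]_m) : dotv u 0 = 0.
Proof. by rewrite /dotv big1 // => i _; rewrite mxE mulr0. Qed.
Lemma dotv_tr m p (A : 'M[R]_(m, p)) (l : 'cV[R]_m) (w : 'cV[R]_p) :
  dotv (A^T *m l) w = dotv l (A *m w).
Proof. by rewrite !dotvE trmx_mul trmxK mulmxA. Qed.

Lemma sqn_ge0 m (u : 'cV[R]_m) : 0 <= sqn u.
Proof. by apply: sumr_ge0 => i _; rewrite -expr2 sqr_ge0. Qed.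
Lemma enorm_ge0 m (u : 'cV[R]_m) : 0 <= enorm u.
Proof. exact: sqrtr_ge0. Qed.
Lemma enorm_sq m (u : 'cV[R]_m) : enorm u ^+ 2 = sqn u.
Proof. by rewrite sqr_sqrtr // sqn_ge0. Qed.
Lemma sqnB m (u v : 'cV[R]_m) : sqn (u - v) = sqn (v - u).
Proof. by rewrite -opprB /sqn dotvNl dotvNr opprK. Qed.

Lemma sqn_col m1 m2 (u : 'cV[R]_m1) (v : 'cV[R]_m2) :
  sqn (col_mx u v) = sqn u + sqn v.
Proof.
rewrite /sqn /dotv big_split_ord /=; congr (_ + _); apply: eq_bigr => i _.
  by rewrite col_mxEu.
by rewrite col_mxEd.
Qed.

Lemma CS m (u v : 'cV[R]_m) : dotv u v <= enorm u * enorm v.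
Proof.
set p := dotv u v; set nu := enorm u; set nv := enorm v.
have h1 := sqn_ge0 (nv *: u - nu *: v).
rewrite /sqn !(dotvBl, dotvBr, dotvZl, dotvZr) in h1.
rewrite -/(sqn u) -/(sqn v) -!enorm_sq -/nu -/nv [dotv v u]dotvC -/p in h1.
have hu : 0 <= nu by apply: enorm_ge0.
have hv : 0 <= nv by apply: enorm_ge0.
have [hp|hp] := ltP 0 (nu * nv).
  have : 0 <= nu * nv * (nu * nv - p) by nra.
  by rewrite pmulr_rge0 // subr_ge0.
have h0 : nu * nv = 0 by apply/eqP; rewrite eq_le hp mulr_ge0.
rewrite h0; rewrite leNgt; apply/negP => pp.
have [nu0|nv0] : nu = 0 \/ nv = 0.
  by move/eqP: h0; rewrite mulf_eq0 => /orP [] /eqP; [left|right].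
- have h2 := sqn_ge0 (((nv^+2 + 1) / (2 * p)) *: u - v).
  rewrite /sqn !(dotvBl, dotvBr, dotvZl, dotvZr) in h2.
  rewrite -/(sqn u) -/(sqn v) -!enorm_sq -/nu -/nv [dotv v u]dotvC -/p nu0 in h2.
  have : (nv ^+ 2 + 1) / (2 * p) * p = (nv^+2 + 1) / 2.
    by field; rewrite gt_eqF.
  nra.
- have h2 := sqn_ge0 (((nu^+2 + 1) / (2 * p)) *: v - u).
  rewrite /sqn !(dotvBl, dotvBr, dotvZl, dotvZr) in h2.
  rewrite -/(sqn u) -/(sqn v) -!enorm_sq -/nu -/nv [dotv v u]dotvC -/p nv0 in h2.
  have : (nu ^+ 2 + 1) / (2 * p) * p = (nu^+2 + 1) / 2.
    by field; rewrite gt_eqF.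
  nra.
Qed.

End Vec.

Ltac sumfold := repeat (rewrite -(big_split (index_enum _)) || rewrite -(sumrB (index_enum _)) || rewrite (mulr_sumr (index_enum _))).

Lemma ler_sum3 (R : realType) m (F G H K : 'I_m -> R) :
  (forall i, F i <= G i + H i - K i) ->
  \sum_(i < m) F i <= \sum_(i < m) G i + \sum_(i < m) H i - \sum_(i < m) K i.
Proof.
move=> h; rewrite -big_split -sumrB /=; exact: ler_sum.
Qed.

Section S.
Variable R : realType.
Variable m : nat.
Lemma L1 (c d : R) (F G H K M : 'I_m -> R) :
  (forall i, c * (F i - G i) <= H i + d * K i - M i) ->
  c * (\sum_(i < m) F i - \sum_(i < m) G i) <=
  \sum_(i < m) H i + d * \sum_(i < m) K i - \sum_(i < m) M i.
Proof.
move=> h; have := @ler_sum _ _ (index_enum 'I_m) xpredT _ _ (fun i _ => h i).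
by rewrite -!mulr_sumr !sumrB !big_split /= -!mulr_sumr.
Qed.
Lemma L2 (t d : R) (C D C0 D0 C1 D1 : 'I_m -> R) :
  (forall i, C i + d * D i <= t * (C0 i + d * D0 i) + (1 - t) * (C1 i + d * D1 i)) ->
  \sum_(i < m) C i + d * \sum_(i < m) D i <=
  t * (\sum_(i < m) C0 i + d * \sum_(i < m) D0 i) +
  (1 - t) * (\sum_(i < m) C1 i + d * \sum_(i < m) D1 i).
Proof.
move=> h; have := @ler_sum _ _ (index_enum 'I_m) xpredT _ _ (fun i _ => h i).
by rewrite !big_split /= -!mulr_sumr !big_split /= -!mulr_sumr.
Qed.
Lemma L3 (t : R) (Z X Y : 'I_m -> R) :
  (forall i, Z i <= t * X i + (1 - t) * Y i) ->
  \sum_(i < m) Z i <= t * \sum_(i < m) X i + (1 - t) * \sum_(i < m) Y i.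
Proof.
move=> h; have := @ler_sum _ _ (index_enum 'I_m) xpredT _ _ (fun i _ => h i).
by rewrite !big_split /= -!mulr_sumr.
Qed.
End S.

Section Phi.
Variable R : realType.
Variable beta : R.
Hypothesis hb : 0 < beta.

Definition phiE m (l u : 'cV[R]_m) := dotv l u + beta / 2 * sqn u.
Definition phiI m (l v : 'cV[R]_m) :=
  (2 * beta)^-1 * (sqn (pospart (beta *: v + l)) - sqn l).

Lemma phiE_fb m (l ls u : 'cV[R]_m) :
  (2 * beta)^-1 * (sqn (l + beta *: u - ls) - sqn (l - ls)) <= phiE l u - dotv ls u.
Proof.
rewrite /phiE /sqn /dotv; apply: L1 => i; rewrite !mxE /=.
rewrite le_eqVlt; apply/orP; left; apply/eqP; field; rewrite gt_eqF //.
Qed.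

Lemma phiI_fb m (l ls v : 'cV[R]_m) : (forall i, 0 <= ls i 0) ->
  (2 * beta)^-1 * (sqn (pospart (l + beta *: v) - ls) - sqn (l - ls))
   <= phiI l v - dotv ls v.
Proof.
move=> hls.
rewrite /phiI /sqn /dotv; sumfold. 
apply: ler_sum => i _; rewrite !mxE /=.
set a := l i 0; set w := v i 0; set mm := ls i 0.
have hm : 0 <= mm by apply: hls.
rewrite [beta * w + a]addrC.
set p := Num.max (a + beta * w) 0.
have hp1 : a + beta * w <= p by rewrite le_max lexx.
have hp2 : 0 <= p by rewrite le_max lexx orbT.
have hp3 : p * p = p * (a + beta * w).
  by rewrite /p; case: (leP (a + beta * w) 0) => h; rewrite ?mul0r.
have hib : 0 < (2 * beta)^-1 by rewrite invr_gt0 mulr_gt0.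
have key : (2 * beta)^-1 * ((p - mm) * (p - mm) - (a - mm) * (a - mm))
   = (2 * beta)^-1 * (p * p - a * a) - mm * w - (2 * beta)^-1 * (2 * mm * (p - (a + beta * w))).
  field; rewrite gt_eqF //.
rewrite key; rewrite lerBlDr lerDl; apply: mulr_ge0; first exact: ltW.
by apply: mulr_ge0; [nra| rewrite subr_ge0].
Qed.

Lemma phiI_feas m (l v : 'cV[R]_m) : (forall i, v i 0 <= 0) -> phiI l v <= 0.
Proof.
move=> hv; rewrite /phiI pmulr_rle0 ?invr_gt0 ?mulr_gt0 // subr_le0.
apply: ler_sum => i _; rewrite !mxE /=.
have := hv i; set w := v i 0; set a := l i 0 => hw.
case: (leP (beta * w + a) 0) => h.
- by rewrite mul0r -expr2 sqr_ge0.
- have : beta * w <= 0 by rewrite pmulr_rle0.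
  nra.
Qed.

Lemma phiE_conv m (l u0 u1 : 'cV[R]_m) t : 0 <= t <= 1 ->
  phiE l (t *: u0 + (1 - t) *: u1) <= t * phiE l u0 + (1 - t) * phiE l u1.
Proof.
case/andP=> t0 t1.
rewrite /phiE /sqn /dotv; apply: L2 => i; rewrite !mxE /=.
set a := u0 i 0; set b := u1 i 0; set c := l i 0.
have : 0 <= beta / 2 * (t * (1 - t) * ((a - b) * (a - b))).
  apply: mulr_ge0; first by apply: divr_ge0; [exact: ltW|].
  apply: mulr_ge0; [apply: mulr_ge0; lra| rewrite -expr2 sqr_ge0 //].
set z := (X in 0 <= X) => hz.
have -> : t * (c * a + beta / 2 * (a * a)) + (1 - t) * (c * b + beta / 2 * (b * b))
  = c * (t * a + (1 - t) * b) + beta / 2 * ((t * a + (1 - t) * b) * (t * a + (1 - t) * b)) + z.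
  by rewrite /z; ring.
by rewrite lerDl.
Qed.

Lemma maxsq_conv (a b t : R) : 0 <= t <= 1 ->
  Num.max (t * a + (1 - t) * b) 0 * Num.max (t * a + (1 - t) * b) 0
  <= t * (Num.max a 0 * Num.max a 0) + (1 - t) * (Num.max b 0 * Num.max b 0).
Proof.
case/andP=> t0 t1.
set pa := Num.max a 0; set pb := Num.max b 0.
have ha1 : a <= pa by rewrite le_max lexx.
have ha2 : 0 <= pa by rewrite le_max lexx orbT.
have hb1 : b <= pb by rewrite le_max lexx.
have hb2 : 0 <= pb by rewrite le_max lexx orbT.
have hq : 0 <= Num.max (t * a + (1 - t) * b) 0 <= t * pa + (1 - t) * pb.
  have h1 : t * a <= t * pa by rewrite ler_wpM2l.
  have h2 : (1 - t) * b <= (1 - t) * pb by rewrite ler_wpM2l // subr_ge0.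
  have h3 : 0 <= t * pa by rewrite mulr_ge0.
  have h4 : 0 <= (1 - t) * pb by rewrite mulr_ge0 // subr_ge0.
  rewrite le_max lexx orbT /= ge_max; apply/andP; split; lra.
have hc : (t * pa + (1 - t) * pb) ^+ 2 <= t * (pa * pa) + (1 - t) * (pb * pb).
  have : 0 <= t * (1 - t) * ((pa - pb) * (pa - pb)).
    by apply: mulr_ge0; [apply: mulr_ge0; lra | rewrite -expr2 sqr_ge0].
  move=> h; have e : t * (pa * pa) + (1 - t) * (pb * pb) - (t * pa + (1 - t) * pb) ^+ 2
     = t * (1 - t) * ((pa - pb) * (pa - pb)) by ring.
  by rewrite -subr_ge0 e.
case/andP: hq => hq1 hq2.
apply: le_trans hc; rewrite expr2; exact: ler_pM.
Qed.

Lemma phiI_conv m (l u0 u1 : 'cV[R]_m) t : 0 <= t <= 1 ->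
  phiI l (t *: u0 + (1 - t) *: u1) <= t * phiI l u0 + (1 - t) * phiI l u1.
Proof.
move=> ht; rewrite /phiI.
have e : forall X Y Z : R, t * ((2 * beta)^-1 * (X - Z)) + (1 - t) * ((2 * beta)^-1 * (Y - Z))
   = (2 * beta)^-1 * ((t * X + (1 - t) * Y) - Z) by move=> X Y Z; ring.
rewrite e ler_pM2l ?invr_gt0 ?mulr_gt0 // lerD2r.
rewrite /sqn /dotv; apply: L3 => i; rewrite !mxE /=.
have -> : beta * (t * u0 i 0 + (1 - t) * u1 i 0) + l i 0
   = t * (beta * u0 i 0 + l i 0) + (1 - t) * (beta * u1 i 0 + l i 0) by ring.
exact: maxsq_conv.
Qed.

End Phi.

Lemma lim_lemma (R : realType) (c a : R) :
  (forall t, 0 < t <= 1 -> c * (1 - t) <= a) -> c <= a.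
Proof.
move=> h.
have a0 : 0 <= a by have := h 1; rewrite subrr mulr0; apply; rewrite ltr01 lexx.
case: (leP c a) => // ac.
have c0 : 0 < c by apply: le_lt_trans ac.
have := h ((c - a) / (2 * c)).
have e : c * (1 - (c - a) / (2 * c)) = (c + a) / 2 by field; rewrite gt_eqF.
rewrite e => hh.
have : (c + a) / 2 <= a.
  apply: hh; apply/andP; split.
    by apply: divr_gt0; [rewrite subr_gt0 | rewrite mulr_gt0].
  by rewrite ler_pdivrMr ?mulr_gt0 // mul1r; lra.
lra.
Qed.

Lemma sqn_comb (R : realType) m (a b : 'cV[R]_m) t :
  sqn (t *: a + (1 - t) *: b) = t * sqn a + (1 - t) * sqn b - t * (1 - t) * sqn (a - b).
Proof.
rewrite /sqn !(dotvBl, dotvBr, dotvDl, dotvDr, dotvNl, dotvNr, dotvZl, dotvZr) [dotv b a]dotvC; ring.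
Qed.

Section OneStep.
Variable R : realType.
Variables (n mE mI : nat) (f : 'cV[R]_n -> R) (mu : R) (r : 'cV[R]_n -> \bar R)
  (AE : 'M[R]_(mE, n)) (bE : 'cV[R]_mE) (AI : 'M[R]_(mI, n)) (bI : 'cV[R]_mI)
  (xs : 'cV[R]_n) (lEs : 'cV[R]_mE) (lIs : 'cV[R]_mI).
Hypotheses (hmu : 0 <= mu) (hsc : strongly_convex f mu) (hr : econvex r)
  (hpr : eproper r)
  (hkkt : subdiff (Gfun f r) xs (- (AE^T *m lEs + AI^T *m lIs)))
  (hE : AE *m xs = bE) (hI : forall i, (AI *m xs) i 0 <= bI i 0)
  (hlIs : forall i, 0 <= lIs i 0) (hcomp : dotv lIs (AI *m xs - bI) = 0).

Definition Qf beta (lE : 'cV[R]_mE) (lI : 'cV[R]_mI) rho xk v :=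
  f v + phiE beta lE (AE *m v - bE) + phiI beta lI (AI *m v - bI) + rho / 2 * sqn (v - xk).

Lemma PsiE beta lE lI rho xk v :
  Psi f r AE bE AI bI beta lE lI rho xk v = (r v + (Qf beta lE lI rho xk v)%:E)%E.
Proof.
rewrite /Psi /auglag /Gfun /Qf (addeC (f v)%:E) -!addeA -!EFinD.
by congr (_ + _%:E)%E; rewrite /phiE /phiI; ring.
Qed.

Lemma affine_comb p (A : 'M[R]_(p, n)) (b : 'cV[R]_p) (u v : 'cV[R]_n) t :
  A *m (t *: u + (1 - t) *: v) - b = t *: (A *m u - b) + (1 - t) *: (A *m v - b).
Proof.
rewrite mulmxDr -!scalemxAr.
move: (A *m u) (A *m v) => U V.
by apply/matrixP => i j; rewrite !mxE; ring.
Qed.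

Lemma Q_conv beta lE lI rho xk t (u v : 'cV[R]_n) : 0 < beta -> 0 <= t <= 1 ->
  Qf beta lE lI rho xk (t *: u + (1 - t) *: v) <=
  t * Qf beta lE lI rho xk u + (1 - t) * Qf beta lE lI rho xk v
  - rho / 2 * (t * (1 - t) * sqn (u - v)).
Proof.
move=> hb ht; rewrite /Qf.
have h1 := hsc u v ht.
have h2 := phiE_conv hb lE (AE *m u - bE) (AE *m v - bE) ht.
have h3 := phiI_conv hb lI (AI *m u - bI) (AI *m v - bI) ht.
rewrite -!affine_comb in h2 h3.
have e : t *: u + (1 - t) *: v - xk = t *: (u - xk) + (1 - t) *: (v - xk).
  by apply/matrixP => i j; rewrite !mxE; ring.
rewrite e sqn_comb.
have e2 : u - xk - (v - xk) = u - v by rewrite opprB addrA subrK.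
rewrite e2.
have hm : 0 <= mu / 2 * t * (1 - t) * sqn (u - v).
  case/andP: ht => t0 t1.
  apply: mulr_ge0; last exact: sqn_ge0. apply: mulr_ge0; last lra. apply: mulr_ge0 => //. apply: divr_ge0 => //.
lra.
Qed.

Lemma one_step beta rho lE lI xk y g : 0 < beta -> 0 < rho ->
  Psi f r AE bE AI bI beta lE lI rho xk y \is a fin_num ->
  (forall t, 0 < t <= 1 ->
    (Psi f r AE bE AI bI beta lE lI rho xk y + (t * dotv g (xs - y))%:E
     <= Psi f r AE bE AI bI beta lE lI rho xk (t *: xs + (1 - t) *: y))%E) ->
  2 * beta * dotv g (xs - y) + beta * rho * sqn (y - xs)
  + sqn (lE + beta *: (AE *m y - bE) - lEs)
  + sqn (pospart (lI + beta *: (AI *m y - bI)) - lIs)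
  <= beta * rho * sqn (xk - xs) + sqn (lE - lEs) + sqn (lI - lIs).
Proof.
move=> hb hrho hfin Ht.
set Q := Qf beta lE lI rho xk.
have rxs : r xs \is a fin_num.
  by case: hkkt => + _; rewrite /Gfun fin_numD => /andP[].
have ry : r y \is a fin_num.
  by move: hfin; rewrite PsiE fin_numD => /andP[].
set rs := fine (r xs); set rY := fine (r y).
set dt := dotv g (xs - y).
have step : forall t, 0 < t <= 1 ->
    rY + Q y + t * dt <= t * rs + (1 - t) * rY + Q (t *: xs + (1 - t) *: y).
  move=> t ht; have := Ht t ht.
  have ht' : 0 <= t <= 1 by case/andP: ht => /ltW -> ->.
  have hc := hr xs y ht'.
  rewrite !PsiE -/Q -(fineK ry) -/rY => H.
  rewrite -lee_fin !EFinD.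
  apply: (le_trans H); apply: leeD2r.
  apply: (le_trans hc); rewrite -(fineK rxs) -(fineK ry) -/rs -/rY.
  by rewrite -!EFinM -EFinD.
set S := sqn (xs - y).
set W := rs + Q xs - (rY + Q y).
have lim : dt + rho / 2 * S <= W.
  have := @lim_lemma R (rho / 2 * S) (W - dt).
  rewrite lerBrDl => -> // t ht.
  have ht' : 0 <= t <= 1 by case/andP: ht => /ltW -> ->.
  have h1 := step t ht.
  have h2 := Q_conv lE lI rho xk xs y hb ht'.
  rewrite -/Q -/S in h2.
  case/andP: ht => t0 t1.
  have : t * (rho / 2 * S * (1 - t)) <= t * (W - dt).
    rewrite /W; nra.
  by rewrite ler_pM2l.
have kk : f xs + rs - (f y + rY) <= dotv lEs (AE *m y - bE) + dotv lIs (AI *m y - bI).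
  case: hkkt => _ /(_ y); rewrite /Gfun -(fineK rxs) -(fineK ry) -/rs -/rY -!EFinD lee_fin.
  rewrite dotvNl dotvDl !dotv_tr !mulmxBr !dotvBr hE.
  have -> : dotv lIs (AI *m xs) = dotv lIs bI.
    by apply/eqP; rewrite -subr_eq0 -dotvBr hcomp.
  have -> : AI *m y = (AI *m y - bI) + bI by rewrite subrK.
  have -> : AE *m y = (AE *m y - bE) + bE by rewrite subrK.
  rewrite !dotvDr; lra.
have px : phiE beta lE (AE *m xs - bE) + phiI beta lI (AI *m xs - bI) <= 0.
  have -> : phiE beta lE (AE *m xs - bE) = 0.
    by rewrite hE subrr /phiE dotv0r /sqn dotv0r mulr0 addr0.
  rewrite add0r; apply: phiI_feas => // i; move: (hI i); move: (AI *m xs) => M hM; rewrite !mxE subr_le0 //.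
have fbE := phiE_fb hb lE lEs (AE *m y - bE).
have fbI := phiI_fb hb lI (AI *m y - bI) hlIs.
have sxk : 0 <= sqn (y - xk) by apply: sqn_ge0.
rewrite /W /Q /Qf in lim.
rewrite sqnB -/S [sqn (xk - xs)]sqnB.
set ib := (2 * beta)^-1 in fbE fbI.
have hib : ib * (2 * beta) = 1 by rewrite mulVf // gt_eqF // mulr_gt0.
clearbody ib.
set SE := sqn (lE + beta *: (AE *m y - bE) - lEs) in fbE *.
set SI := sqn (pospart (lI + beta *: (AI *m y - bI)) - lIs) in fbI *.
set T := sqn (xs - xk) in lim *.
set sE := sqn (lE - lEs) in fbE *.
set sI := sqn (lI - lIs) in fbI *.
have H : dt + rho / 2 * S <= rho / 2 * T - ib * (SE - sE) - ib * (SI - sI).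
  move: lim kk px fbE fbI sxk.
  set a1 := phiE _ _ (AE *m y - bE); set a2 := phiI _ _ (AI *m y - bI).
  set a3 := phiE _ _ (AE *m xs - bE); set a4 := phiI _ _ (AI *m xs - bI).
  move=> lim kk px fbE fbI sxk.
  have : 0 <= rho / 2 * sqn (y - xk) by apply: mulr_ge0; [lra|].
  lra.
have H2 : 0 <= 2 * beta by lra.
have := ler_wpM2l H2 H.
have e1 : 2 * beta * (dt + rho / 2 * S) = 2 * beta * dt + beta * rho * S by field.
have e2 : 2 * beta * (rho / 2 * T - ib * (SE - sE) - ib * (SI - sI))
   = beta * rho * T - (ib * (2 * beta)) * (SE - sE) - (ib * (2 * beta)) * (SI - sI) by field.
rewrite e1 e2 hib !mul1r.
lra.
Qed.

End OneStep.

Lemma recur (R : realType) (D D' X q s : R) : 0 <= D -> 0 <= D' -> 0 <= X -> 0 <= q -> 0 < s ->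
  D' ^+ 2 <= D ^+ 2 + 2 * q * X -> s ^+ 2 * X ^+ 2 <= D' ^+ 2 -> D' <= D + 2 * (q / s).
Proof.
move=> hD hD' hX hq hs h1 h2.
have sX : s * X <= D'.
  rewrite leNgt; apply/negP => lt.
  have : D' * D' < (s * X) * (s * X) by apply: ltr_pM.
  rewrite -exprMn in h2; rewrite -!expr2; lra.
set b := q / s.
have hb : 0 <= b by apply: divr_ge0 => //; exact: ltW.
have qX : q * X <= b * D'.
  have -> : q * X = b * (s * X) by rewrite /b; field; rewrite gt_eqF.
  by apply: ler_wpM2l.
rewrite leNgt; apply/negP => lt.
have h3 : D' ^+ 2 <= D ^+ 2 + 2 * b * D' by lra.
have h4 : (D + 2 * b) * (D + 2 * b) < D' * D' by apply: ltr_pM => //; lra.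
nra.
Qed.


Unset Implicit Arguments. Set Strict Implicit. Set Printing Implicit Defensive.

Theorem lemma5p6 (R : realType) (n mE mI : nat)
  (f : 'cV[R]_n -> R) (gf : 'cV[R]_n -> 'cV[R]_n) (Lf mu : R)
  (r : 'cV[R]_n -> \bar R)
  (AE : 'M[R]_(mE, n)) (bE : 'cV[R]_mE) (AI : 'M[R]_(mI, n)) (bI : 'cV[R]_mI)
  (xs : 'cV[R]_n) (lEs : 'cV[R]_mE) (lIs : 'cV[R]_mI)
  (eps beta0 rho0 sigma : R) (K : nat)
  (x : nat -> 'cV[R]_n) (lE : nat -> 'cV[R]_mE) (lI : nat -> 'cV[R]_mI) :
  (* standing assumptions on f and r *)
  has_gradient f gf -> lipschitz_vec gf Lf -> 0 <= mu -> strongly_convex f mu ->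
  econvex r -> eproper r -> eclosed r ->
  (* KKT point (xs, lEs, lIs) *)
  subdiff (Gfun f r) xs (- (AE^T *m lEs + AI^T *m lIs)) ->
  AE *m xs = bE ->
  (forall i, (AI *m xs) i 0 <= bI i 0) ->
  (forall i, 0 <= lIs i 0) ->
  dotv lIs (AI *m xs - bI) = 0 ->
  (* parameters *)
  0 < eps < 1 -> 0 < beta0 -> 0 < rho0 -> 1 < sigma -> (1 <= K)%N ->
  (* iPALM iterates *)
  (Gfun f r (x 0%N) < +oo)%E ->
  (forall k : nat,
     dist0_le
       (subdiff (Psi f r AE bE AI bI (beta_k beta0 sigma k) (lE k) (lI k)
                     (rho_k rho0 sigma k) (x k)) (x k.+1))
       (epsbar_k eps beta0 rho0 sigma k)
     /\ lE k.+1 = lE k + beta_k beta0 sigma k *: (AE *m x k.+1 - bE)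
     /\ lI k.+1 = pospart (lI k + beta_k beta0 sigma k *: (AI *m x k.+1 - bI))) ->
  let D0 := Num.sqrt (beta0 * rho0 * sqn (x 0%N - xs)
                      + sqn (col_mx (lE 0%N - lEs) (lI 0%N - lIs))) in
  let eb := epsbar eps beta0 rho0 sigma in
  let Bx := 2 * eb * (sigma ^+ K - 1) / (rho0 * (sigma - 1))
            + D0 / Num.sqrt (beta0 * rho0) in
  let Bl := 2 * eb * Num.sqrt beta0 * (sigma ^+ K - 1)
              / (Num.sqrt rho0 * (sigma - 1)) + D0 in
  (forall k : nat, (k <= K)%N ->
     enorm (x k - xs) <= Bx
     /\ enorm (col_mx (lE k - lEs) (lI k - lIs)) <= Bl)
  /\
  (forall k : nat, (k < K)%N -> forall z : 'cV[R]_n,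
     (forall y, (Psi f r AE bE AI bI (beta_k beta0 sigma k) (lE k) (lI k)
                     (rho_k rho0 sigma k) (x k) z
              <= Psi f r AE bE AI bI (beta_k beta0 sigma k) (lE k) (lI k)
                     (rho_k rho0 sigma k) (x k) y)%E) ->
     enorm (z - xs) <= Bx).

Proof.
move=> hg hlip hmu hsc hr hpr hcl hkkt hE hI hlIs hcomp heps hb0 hr0 hs hK hx0 hit D0 eb Bx Bl.
have hs0 : 0 < sigma by apply: lt_trans hs.
set c := beta0 * rho0.
have hc : 0 < c by apply: mulr_gt0.
set s := Num.sqrt c.
have hsp : 0 < s by rewrite sqrtr_gt0.
have hss : s * s = c by rewrite -expr2 sqr_sqrtr // ltW.
set P := fun k => c * sqn (x k - xs) + sqn (col_mx (lE k - lEs) (lI k - lIs)).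
set Dk := fun k => Num.sqrt (P k).
have P0 : forall k, 0 <= P k.
  by move=> k; rewrite /P addr_ge0 ?mulr_ge0 ?sqn_ge0 // ltW.
have hbk : forall k, 0 < beta_k beta0 sigma k.
  by move=> k; rewrite /beta_k mulr_gt0 // exprn_gt0.
have hrk : forall k, 0 < rho_k rho0 sigma k.
  by move=> k; rewrite /rho_k mulr_gt0 // invr_gt0 exprn_gt0.
have bkrk : forall k, beta_k beta0 sigma k * rho_k rho0 sigma k = c.
  move=> k; rewrite /beta_k /rho_k /c; field.
  by rewrite expf_neq0 // gt_eqF.
have ebk : forall k, epsbar_k eps beta0 rho0 sigma k <= eb.
  by move=> k; rewrite /epsbar_k ge_min lexx.
have eb0 : 0 <= eb.
  rewrite /eb /epsbar; case/andP: heps => e0 e1.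
  apply: mulr_ge0; last by rewrite le_min ler01 sqrtr_ge0.
  apply: divr_ge0; first by apply: mulr_ge0; lra.
  apply: mulr_ge0; lra.
have stepD : forall k, Dk k.+1 <= Dk k + 2 * (beta_k beta0 sigma k * eb / s).
  move=> k; case: (hit k) => hd [hlE hlI].
  apply/ler_addgt0Pr => e e0.
  set bk := beta_k beta0 sigma k.
  have hpos : 0 < e * s / (2 * bk).
    by apply: divr_gt0; [exact: mulr_gt0| apply: mulr_gt0 => //; exact: hbk].
  have [g [[gfin gsub] gn]] := hd _ hpos.
  have os := one_step hmu hsc hr hkkt hE hI hlIs hcomp (hbk k) (hrk k) gfin.
  have := os g.
  set y := x k.+1.
  have os' : forall t, 0 < t <= 1 ->
    (Psi f r AE bE AI bI bk (lE k) (lI k) (rho_k rho0 sigma k) (x k) y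
     + (t * dotv g (xs - y))%:E <=
     Psi f r AE bE AI bI bk (lE k) (lI k) (rho_k rho0 sigma k) (x k)
       (t *: xs + (1 - t) *: y))%E.
    move=> t ht; have := gsub (t *: xs + (1 - t) *: y).
    have -> : t *: xs + (1 - t) *: y - y = t *: (xs - y).
      by apply/matrixP => i j; rewrite !mxE; ring.
    by rewrite dotvZr.
  move=> /(_ os') {os os'}.
  rewrite -/bk -hlE -hlI bkrk.
  move=> H.
  set X := enorm (y - xs).
  have hX : 0 <= X by apply: enorm_ge0.
  have cs : - dotv g (xs - y) <= (epsbar_k eps beta0 rho0 sigma k + e * s / (2 * bk)) * X.
    rewrite -dotvNr opprB.
    apply: le_trans (CS _ _) _; apply: ler_wpM2r => //.
  have HP : P k.+1 <= P k + 2 * (bk * (eb + e * s / (2 * bk))) * X.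
    rewrite /P !sqn_col.
    have : bk * (epsbar_k eps beta0 rho0 sigma k + e * s / (2 * bk)) * X
        <= bk * (eb + e * s / (2 * bk)) * X.
      apply: ler_wpM2r => //; apply: ler_wpM2l; [exact: ltW (hbk k)|].
      by rewrite lerD2r.
    have : bk * (- dotv g (xs - y)) <= bk * ((epsbar_k eps beta0 rho0 sigma k + e * s / (2 * bk)) * X).
      by apply: ler_wpM2l => //; exact: ltW (hbk k).
    nra.
  have hq : 0 <= bk * (eb + e * s / (2 * bk)).
    apply: mulr_ge0; first exact: ltW (hbk k).
    apply: addr_ge0 => //; apply: divr_ge0; [apply: mulr_ge0; exact: ltW|].
    by apply: mulr_ge0 => //; exact: ltW (hbk k).
  have := @recur R (Dk k) (Dk k.+1) X (bk * (eb + e * s / (2 * bk))) s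
     (sqrtr_ge0 _) (sqrtr_ge0 _) hX hq hsp.
  have e1 : Dk k ^+ 2 = P k by exact: sqr_sqrtr (P0 k).
  have e2 : Dk k.+1 ^+ 2 = P k.+1 by exact: sqr_sqrtr (P0 k.+1).
  rewrite e1 e2 => /(_ HP).
  have hx : s ^+ 2 * X ^+ 2 <= P k.+1.
    rewrite /X enorm_sq expr2 hss /P lerDl; exact: sqn_ge0.
  move=> /(_ hx).
  have -> : 2 * (bk * (eb + e * s / (2 * bk)) / s) = 2 * (bk * eb / s) + e.
    field; rewrite !gt_eqF //; exact: hbk.
  by rewrite addrA.
have accD : forall k, Dk k <= D0 + 2 * eb * beta0 * (sigma ^+ k - 1) / ((sigma - 1) * s).
  elim=> [|k IH].
    by rewrite expr0 subrr mulr0 mul0r addr0.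
  apply: le_trans (stepD k) _.
  have -> : D0 + 2 * eb * beta0 * (sigma ^+ k.+1 - 1) / ((sigma - 1) * s)
     = (D0 + 2 * eb * beta0 * (sigma ^+ k - 1) / ((sigma - 1) * s))
       + 2 * (beta_k beta0 sigma k * eb / s).
    rewrite /beta_k exprS; field.
    by rewrite (gt_eqF hsp) gt_eqF // subr_gt0.
  by rewrite lerD2r.
have pk : forall k, (k <= K)%N -> sigma ^+ k - 1 <= sigma ^+ K - 1.
  by move=> k hk; rewrite lerD2r ler_eXn2l.
have xb : forall k v, (k <= K)%N -> c * sqn (v - xs) <= P k -> enorm (v - xs) <= Bx.
  move=> k v hk hv.
  have h1 : s * enorm (v - xs) <= Dk k.
    rewrite /s /enorm -sqrtrM; last exact: ltW.
    by rewrite /Dk /= ler_sqrt.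
  have h2 : enorm (v - xs) <= Dk k / s by rewrite ler_pdivlMr // mulrC.
  apply: (le_trans h2).
  have h3 : Dk k / s <= (D0 + 2 * eb * beta0 * (sigma ^+ k - 1) / ((sigma - 1) * s)) / s.
    by rewrite ler_pM2r ?invr_gt0 //; exact: accD.
  apply: (le_trans h3).
  rewrite /Bx mulrDl addrC; apply: lerD.
  - have -> : 2 * eb * beta0 * (sigma ^+ k - 1) / ((sigma - 1) * s) / s
        = (2 * eb / (rho0 * (sigma - 1))) * (sigma ^+ k - 1).
      have -> : 2 * eb * beta0 * (sigma ^+ k - 1) / ((sigma - 1) * s) / s
          = 2 * eb * beta0 * (sigma ^+ k - 1) / ((sigma - 1) * (s * s)).
        by field; rewrite (gt_eqF hsp) gt_eqF // subr_gt0.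
      rewrite hss /c; field.
      by rewrite !gt_eqF // subr_gt0.
    have -> : 2 * eb * (sigma ^+ K - 1) / (rho0 * (sigma - 1))
        = (2 * eb / (rho0 * (sigma - 1))) * (sigma ^+ K - 1) by rewrite mulrAC.
    apply: ler_wpM2l; last exact: pk.
    apply: divr_ge0; first by apply: mulr_ge0. apply: mulr_ge0; [exact: ltW| rewrite subr_ge0; exact: ltW].
  - by rewrite /D0.
split.
- move=> k hk; split.
  + apply: (xb k) => //; rewrite /P lerDl; exact: sqn_ge0.
  + rewrite /enorm; apply: (@le_trans _ _ (Dk k)).
      by rewrite /Dk /= ler_sqrt ?P0 // /P lerDr mulr_ge0 ?sqn_ge0 // ltW.
    apply: le_trans (accD k) _; rewrite /Bl addrC lerD2r.
    set sb := Num.sqrt beta0; set sr := Num.sqrt rho0.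
    have hsb : 0 < sb by rewrite sqrtr_gt0.
    have hsr : 0 < sr by rewrite sqrtr_gt0.
    have hbb : sb * sb = beta0 by rewrite -expr2 sqr_sqrtr // ltW.
    have -> : s = sb * sr by rewrite /s /c sqrtrM // ltW.
    have -> : 2 * eb * beta0 * (sigma ^+ k - 1) / ((sigma - 1) * (sb * sr))
        = (2 * eb * sb / (sr * (sigma - 1))) * (sigma ^+ k - 1).
      rewrite -hbb; field.
      by rewrite (gt_eqF hsb) (gt_eqF hsr) gt_eqF // subr_gt0.
    have -> : 2 * eb * sb * (sigma ^+ K - 1) / (sr * (sigma - 1))
        = (2 * eb * sb / (sr * (sigma - 1))) * (sigma ^+ K - 1) by rewrite mulrAC.
    apply: ler_wpM2l; last exact: pk.
    apply: divr_ge0; first by apply: mulr_ge0; [apply: mulr_ge0|exact: ltW].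
    apply: mulr_ge0; [exact: ltW| rewrite subr_ge0; exact: ltW].
- move=> k hk z hmin.
  have [hd [hlE hlI]] := hit k.
  have [g [[gfin _] _]] := hd 1 ltr01.
  have zfin : Psi f r AE bE AI bI (beta_k beta0 sigma k) (lE k) (lI k)
      (rho_k rho0 sigma k) (x k) z \is a fin_num.
    rewrite PsiE fin_numD; apply/andP; split => //.
    move: (hmin (x k.+1)) gfin (hpr.1 z); rewrite !PsiE.
    case: (r z) => //; case: (r (x k.+1)) => //.
  have os := one_step hmu hsc hr hkkt hE hI hlIs hcomp (hbk k) (hrk k) zfin.
  have := os 0.
  have os' : forall t, 0 < t <= 1 ->
    (Psi f r AE bE AI bI (beta_k beta0 sigma k) (lE k) (lI k) (rho_k rho0 sigma k) (x k) z
     + (t * dotv 0 (xs - z))%:E <=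
     Psi f r AE bE AI bI (beta_k beta0 sigma k) (lE k) (lI k) (rho_k rho0 sigma k) (x k)
       (t *: xs + (1 - t) *: z))%E.
    move=> t ht; rewrite dotvC dotv0r mulr0 adde0; exact: hmin.
  move=> /(_ os') {os os'}; rewrite bkrk dotvC dotv0r mulr0 add0r => H.
  apply: (xb k); first exact: ltnW.
  rewrite /P sqn_col addrA.
  have := sqn_ge0 (lE k + beta_k beta0 sigma k *: (AE *m z - bE) - lEs).
  have := sqn_ge0 (pospart (lI k + beta_k beta0 sigma k *: (AI *m z - bI)) - lIs).
  lra.
Qed.
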